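(* In the setting below, if $$\sum_{t\in\mathcal K}\|Z^\top f(x_t)\|_2\le \sum_{t\in\mathcal K^c}\|Z^\top f(x_t)\|_2\qquad\text{for all } Z\in\mathbb{R}^{m\times n},$$ then $\bar A$ is a global minimizer of $\min_{A\in\mathbb{R}^{n\times m}}\sum_{t=0}^{T-1}\|(\bar A-A)f(x_t)+\bar d_t\|_2$.
   Context: $f:\mathbb{R}^n\to\mathbb{R}^m$ is given, $\bar A\in\mathbb{R}^{n\times m}$, $\bar d_0,\dots,\bar d_{T-1}\in\mathbb{R}^n$, and $x_0=0_n$, $x_{t+1}=\bar A f(x_t)+\bar d_t$ for $t=0,\dots,T-1$. $\mathcal K:=\{t\in\{0,\dots,T-1\}:\bar d_t\ne 0\}$, $\mathcal K^c:=\{0,\dots,T-1\}\setminus\mathcal K$. *)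

(* Defs.v *)
From HB Require Import structures.
From mathcomp Require Import all_boot all_order all_algebra.
Set Implicit Arguments. Unset Strict Implicit. Unset Printing Implicit Defensive.
Import Order.TTheory GRing.Theory Num.Theory.
Local Open Scope ring_scope.

Definition norm2 (R : rcfType) (k : nat) (v : 'cV[R]_k) : R :=
  Num.sqrt (\sum_(i < k) v i 0 ^+ 2).

Fixpoint traj (R : rcfType) (n m : nat) (f : 'cV[R]_n -> 'cV[R]_m)
    (Abar : 'M[R]_(n, m)) (d : nat -> 'cV[R]_n) (t : nat) : 'cV[R]_n :=
  match t with
  | 0 => 0
  | t'.+1 => Abar *m f (traj f Abar d t') + d t'
  end.

(* Main.v *)
Require Import Defs.
From HB Require Import structures.
From mathcomp Require Import all_boot all_order all_algebra.
From mathcomp Require Import ring.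
Import Order.TTheory GRing.Theory Num.Theory.
Local Open Scope ring_scope.

Lemma sumsq0 (R : rcfType) k (a : 'I_k -> R) :
  \sum_i a i ^+ 2 <= 0 -> forall i, a i = 0.
Proof.
move=> H i.
have H0 : \sum_i a i ^+ 2 = 0.
  by apply/eqP; rewrite eq_le H /=; apply: sumr_ge0 => j _; rewrite sqr_ge0.
have := (psumr_eq0P (fun j _ => sqr_ge0 (a j)) H0) i.
by move=> /(_ isT) /eqP; rewrite sqrf_eq0 => /eqP.
Qed.

Lemma cauchy_schwarz (R : rcfType) k (a b : 'I_k -> R) :
  \sum_i a i * b i <= Num.sqrt (\sum_i a i ^+ 2) * Num.sqrt (\sum_i b i ^+ 2).
Proof.
set su := Num.sqrt _; set sv := Num.sqrt _.
have Ha : 0 <= \sum_i a i ^+ 2 by apply: sumr_ge0 => j _; rewrite sqr_ge0.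
have Hb : 0 <= \sum_i b i ^+ 2 by apply: sumr_ge0 => j _; rewrite sqr_ge0.
have key : 2 * (su * sv) * (\sum_i a i * b i) <= 2 * (su * sv) * (su * sv).
  rewrite mulr_sumr.
  apply: (le_trans (y := \sum_i (a i ^+ 2 * sv ^+ 2 + b i ^+ 2 * su ^+ 2))).
    apply: ler_sum => i _.
    rewrite -subr_ge0.
    have -> : a i ^+ 2 * sv ^+ 2 + b i ^+ 2 * su ^+ 2 - 2 * (su * sv) * (a i * b i)
       = (a i * sv - b i * su) ^+ 2 by ring.
    exact: sqr_ge0.
  rewrite big_split /= -!mulr_suml.
  have e1 : \sum_i a i ^+ 2 = su ^+ 2 by rewrite sqr_sqrtr.
  have e2 : \sum_i b i ^+ 2 = sv ^+ 2 by rewrite sqr_sqrtr.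
  rewrite e1 e2 le_eqVlt; apply/orP; left; apply/eqP; ring.
have [hp|] := boolP (0 < su * sv).
  by move: key; rewrite ler_pM2l // mulr_gt0.
rewrite lt_def negb_and negbK mulr_ge0 ?sqrtr_ge0 // orbF mulf_eq0.
case/orP => /eqP; rewrite /su /sv => /eqP; rewrite sqrtr_eq0 => /sumsq0 H0.
  by rewrite big1 ?mulr_ge0 ?sqrtr_ge0 // => i _; rewrite H0 mul0r.
by rewrite big1 ?mulr_ge0 ?sqrtr_ge0 // => i _; rewrite H0 mulr0.
Qed.

Lemma norm2_ge0 (R : rcfType) k (v : 'cV[R]_k) : 0 <= norm2 v.
Proof. exact: sqrtr_ge0. Qed.

Lemma norm2_triangle (R : rcfType) k (u v : 'cV[R]_k) :
  norm2 (u + v) <= norm2 u + norm2 v.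
Proof.
rewrite /norm2.
set su := Num.sqrt (\sum_i u i 0 ^+ 2); set sv := Num.sqrt (\sum_i v i 0 ^+ 2).
have Ha : 0 <= \sum_i u i 0 ^+ 2 by apply: sumr_ge0 => j _; rewrite sqr_ge0.
have Hb : 0 <= \sum_i v i 0 ^+ 2 by apply: sumr_ge0 => j _; rewrite sqr_ge0.
have s0 : 0 <= su + sv by rewrite addr_ge0 ?sqrtr_ge0.
rewrite -(ger0_norm s0) -sqrtr_sqr ler_wsqrtr //.
have -> : \sum_i (u + v) i 0 ^+ 2 =
   \sum_i u i 0 ^+ 2 + 2 * \sum_i u i 0 * v i 0 + \sum_i v i 0 ^+ 2.
  rewrite mulr_sumr -!big_split /=; apply: eq_bigr => i _; rewrite mxE; ring.
have := @cauchy_schwarz R k (fun i => u i 0) (fun i => v i 0).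
rewrite -/su -/sv => cs.
have -> : (su + sv) ^+ 2 = su ^+ 2 + 2 * (su * sv) + sv ^+ 2 by ring.
rewrite /su /sv !sqr_sqrtr // -/su -/sv.
by rewrite lerD2r lerD2l ler_pM2l.
Qed.

Lemma norm2N (R : rcfType) k (v : 'cV[R]_k) : norm2 (- v) = norm2 v.
Proof. by rewrite /norm2; congr Num.sqrt; apply: eq_bigr => i _; rewrite mxE sqrrN. Qed.

Lemma norm2_0 (R : rcfType) k : norm2 (0 : 'cV[R]_k) = 0.
Proof. by rewrite /norm2 big1 ?sqrtr0 // => i _; rewrite mxE expr0n. Qed.

Theorem corollary1 (R : rcfType) (n m T : nat) (f : 'cV[R]_n -> 'cV[R]_m)
    (Abar : 'M[R]_(n, m)) (d : nat -> 'cV[R]_n) :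
  (forall Z : 'M[R]_(m, n),
     \sum_(0 <= t < T | d t != 0) norm2 (Z^T *m f (traj f Abar d t))
     <= \sum_(0 <= t < T | d t == 0) norm2 (Z^T *m f (traj f Abar d t))) ->
  forall A : 'M[R]_(n, m),
    \sum_(0 <= t < T) norm2 ((Abar - A) *m f (traj f Abar d t) + d t)
    >= \sum_(0 <= t < T) norm2 ((Abar - Abar) *m f (traj f Abar d t) + d t).
Proof.
move=> H A.
have := H (Abar - A)^T; rewrite trmxK.
set g := fun t => (Abar - A) *m f (traj f Abar d t) => HZ.
rewrite subrr.
under eq_bigr do rewrite mul0mx add0r.
rewrite (bigID (fun t => d t == 0)) /=.
rewrite [X in _ <= X](bigID (fun t => d t == 0)) /=.
rewrite big1; last by move=> t /eqP ->; rewrite norm2_0.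
rewrite add0r.
rewrite -/g.
rewrite [X in _ <= X + _](eq_bigr (fun t => norm2 (g t))); last first.
  by move=> t /eqP ->; rewrite addr0.
apply: (le_trans (y := \sum_(0 <= t < T | d t != 0) (norm2 (g t + d t) + norm2 (g t)))).
  apply: ler_sum => t _.
  have e : d t = (g t + d t) + - g t by rewrite addrC addKr.
  rewrite {1}e.
  by rewrite -(@norm2N R n (g t)); apply: norm2_triangle.
rewrite big_split /= addrC lerD2r.
by rewrite /g; exact: HZ.
Qed.
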